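(* Let $\ell\ge 0$ be an even integer. Let $S\subseteq D_{8\ell+6}\setminus\{e\}$ with $|S|=8\ell+4$ and let $x$ be the non-identity element of $D_{8\ell+6}$ not in $S$. If $x$ has order $(4\ell+3)/d$ for some $d\in\{3,5,7\}$, then $D_{8\ell+6}$ has an $S$-sequencing.
   Context: $D_{2m}=\langle u,v : u^m=e=v^2,\ vu=u^{m-1}v\rangle$ is the dihedral group of order $2m$. For $S\subseteq G\setminus\{e\}$ with $|S|=k$, an $S$-sequencing of $G$ is an ordering $(g_1,\dots,g_k)$ of the elements of $S$ such that the partial products $h_0=e$, $h_i=g_1\cdots g_i$ ($1\le i\le k$) are pairwise distinct. *)

(* Defs.v *)
From mathcomp Require Import all_boot all_fingroup all_solvable.
Set Implicit Arguments. Unset Strict Implicit. Unset Printing Implicit Defensive.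
Local Open Scope group_scope.

Definition partial_products (gT : finGroupType) (s : seq gT) : seq gT :=
  1 :: scanl mulg 1 s.

Definition is_S_sequencing (gT : finGroupType) (S : {set gT}) (s : seq gT) : Prop :=
  uniq s /\ [set x in s] = S /\ uniq (partial_products s).

Definition has_S_sequencing (gT : finGroupType) (S : {set gT}) : Prop :=
  exists s : seq gT, is_S_sequencing S s.

(* Main.v *)
Require Import Defs.
From mathcomp Require Import all_boot all_fingroup all_solvable.
From mathcomp Require Import zify.
Set Warnings "-notation-overridden".

Definition vtx := (bool * nat)%type.
Definition lab (m : nat) (u v : vtx) : vtx :=
  if u.1 == v.1 then (false, if u.2 <= v.2 then v.2 - u.2 else m + v.2 - u.2)
  else (true, if u.2 + v.2 < m then u.2 + v.2 else u.2 + v.2 - m).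
Definition psi (m : nat) (u : vtx) : vtx := (~~ u.1, if u.2 == 0 then 0 else m - u.2).
Definition neg (m : nat) (u : vtx) : vtx := (u.1, if u.2 == 0 then 0 else m - u.2).
Definition ladP (q t : nat) : vtx :=
  let m := 8*q+3 in let M := 4*q+1 in let j := t %/ 4 in
  match t %% 4 with
  | 0 => (false, if j == 0 then 0 else m - j)
  | 1 => (true, M - j)
  | 2 => (true, M + j + 1)
  | _ => (false, j.+1) end.
Definition lad q (s : bool) t := if s then psi (8*q+3) (ladP q t) else ladP q t.
Definition llab q s t := lab (8*q+3) (lad q s t) (lad q s t.+1).

Lemma dec4 t : exists j r, t = 4*j+r /\ r < 4.
Proof. exists (t %/ 4), (t %% 4). lia. Qed.

Lemma ladP0 q j : ladP q (4*j) = (false, if j == 0 then 0 else 8*q+3 - j).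
Proof. rewrite /ladP. have -> : (4*j) %% 4 = 0 by lia. have -> : (4*j) %/ 4 = j by lia. done. Qed.
Lemma ladP1 q j : ladP q (4*j+1) = (true, 4*q+1 - j).
Proof. rewrite /ladP. have -> : (4*j+1) %% 4 = 1 by lia. have -> : (4*j+1) %/ 4 = j by lia. done. Qed.
Lemma ladP2 q j : ladP q (4*j+2) = (true, 4*q+1 + j + 1).
Proof. rewrite /ladP. have -> : (4*j+2) %% 4 = 2 by lia. have -> : (4*j+2) %/ 4 = j by lia. done. Qed.
Lemma ladP3 q j : ladP q (4*j+3) = (false, j.+1).
Proof. rewrite /ladP. have -> : (4*j+3) %% 4 = 3 by lia. have -> : (4*j+3) %/ 4 = j by lia. done. Qed.

Ltac split_ifs := repeat match goal with
  | |- context [if ?b then _ else _] => let H := fresh "H" in destruct b eqn:H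
  | H0 : context [if ?b then _ else _] |- _ => let H := fresh "H" in destruct b eqn:H
  end.

Definition regP q (u : vtx) : bool := let J := 2*q in
  if u.1 then (J < u.2) && (u.2 <= 3*J+2) else (u.2 <= J) || (3*J+2 < u.2).
Definition unP q (u : vtx) : nat := let m := 8*q+3 in let M := 4*q+1 in
  if u.1 then (if u.2 <= M then 4*(M - u.2) + 1 else 4*(u.2 - M - 1) + 2)
  else (if u.2 == 0 then 0 else if u.2 <= 2*q then 4*(u.2 - 1) + 3 else 4*(m - u.2)).
Definition unlad q u := if regP q u then (false, unP q u) else (true, unP q (psi (8*q+3) u)).

Ltac cleanb := repeat match goal with
  | H : (_ == _) = true |- _ => move/eqP: H => H
  | H : (_ == _) = false |- _ => move/eqP: H => H
  end.
Ltac fin := cleanb; solve [ f_equal; lia | exfalso; lia | done | (split; lia) ].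

Lemma unlad_lad q s t : t <= 8*q+2 -> unlad q (lad q s t) = (s, t).
Proof.
have [j [r [-> Hr]]] := dec4 t.
case: s; rewrite /lad; case: r Hr => [|[|[|[|r]]]] // _; rewrite ?addn0 ?ladP0 ?ladP1 ?ladP2 ?ladP3 => Ht;
rewrite /unlad /psi /regP /unP /=; split_ifs; simpl in *; fin.
Qed.


Definition unL q (u : vtx) : nat := let m := 8*q+3 in let M := 4*q+1 in
  if u.1 then (if u.2 <= M then 2*(M - u.2) else 2*(u.2 - M) - 2)
  else (if u.2 <= M then 2*u.2 - 1 else 2*(m - u.2) - 1).
Definition unlab q u := if u.2 %% 2 == 1 then (false, unL q u) else (true, unL q (neg (8*q+3) u)).

Lemma succ4 j r : r < 4 -> (4*j+r).+1 = if r == 3 then 4*(j+1) else 4*j+(r.+1).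
Proof. case: r => [|[|[|[|r]]]] //= _; lia. Qed.

Lemma llab_all q s t : t < 8*q+2 ->
  [/\ unlab q (llab q s t) = (s, t), 0 < (llab q s t).2 & (llab q s t).2 < 8*q+3].
Proof.
have [j [r [-> Hr]]] := dec4 t.
rewrite /llab (@succ4 j r Hr).
case: s; rewrite /lad; case: r Hr => [|[|[|[|r]]]] // _; rewrite /= ?addn0 ?ladP0 ?ladP1 ?ladP2 ?ladP3 => Ht;
rewrite /unlab /unL /neg /lab /psi /=; split_ifs; simpl in *; cleanb; (split; [fin|lia|lia]).
Qed.

Lemma lad_lt q s t : t <= 8*q+2 -> (lad q s t).2 < 8*q+3.
Proof.
have [j [r [-> Hr]]] := dec4 t.
case: s; rewrite /lad; case: r Hr => [|[|[|[|r]]]] // _; rewrite ?addn0 ?ladP0 ?ladP1 ?ladP2 ?ladP3 => Ht;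
rewrite /psi /=; split_ifs; simpl in *; cleanb; lia.
Qed.


Definition optlab q (o : option (bool*nat)) : vtx :=
  if o is Some st then llab q st.1 st.2 else (true, 0).

Lemma optlab_inj q o1 o2 :
  (if o1 is Some st then st.2 < 8*q+2 else true) ->
  (if o2 is Some st then st.2 < 8*q+2 else true) ->
  optlab q o1 = optlab q o2 -> o1 = o2.
Proof.
case: o1 => [[s1 t1]|]; case: o2 => [[s2 t2]|] //= h1 h2.
- have [e1 _ _] := llab_all q s1 t1 h1; have [e2 _ _] := llab_all q s2 t2 h2.
  by move=> E; move: e1; rewrite E e2 => ->.
- by have [_ p _] := llab_all q s1 t1 h1 => E; move: p; rewrite E.
- by have [_ p _] := llab_all q s2 t2 h2 => E; move: p; rewrite -E.
Qed.

Lemma frame q (sig : nat -> bool*nat) (tau : nat -> option (bool*nat)) N (ex : bool*nat) :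
  (forall n, n < N -> (sig n).2 <= 8*q+2) ->
  (forall n1 n2, n1 < N -> n2 < N -> sig n1 = sig n2 -> n1 = n2) ->
  (forall n, n.+1 < N -> lab (8*q+3) (lad q (sig n).1 (sig n).2) (lad q (sig n.+1).1 (sig n.+1).2)
                         = optlab q (tau n)) ->
  (forall n, n.+1 < N -> if tau n is Some st then st.2 < 8*q+2 /\ st <> ex else True) ->
  (forall n1 n2, n1.+1 < N -> n2.+1 < N -> tau n1 = tau n2 -> n1 = n2) ->
  ex.2 < 8*q+2 ->
  let P n := lad q (sig n).1 (sig n).2 in
  [/\ uniq [seq P n | n <- iota 0 N],
      uniq [seq lab (8*q+3) (P n) (P n.+1) | n <- iota 0 N.-1],
      (forall n, n.+1 < N -> lab (8*q+3) (P n) (P n.+1) != (false, 0) /\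
                              lab (8*q+3) (P n) (P n.+1) != llab q ex.1 ex.2)
    & forall n, n < N -> (P n).2 < 8*q+3].
Proof.
move=> Hr Hsig Hlab Htau Htinj Hex P.
have Hto n : n.+1 < N -> if tau n is Some st then st.2 < 8*q+2 else true.
  by move=> /Htau; case: (tau n) => // st [].
split.
- rewrite map_inj_in_uniq ?iota_uniq // => n1 n2.
  rewrite !mem_iota !add0n => /andP[_ h1] /andP[_ h2] E.
  apply: Hsig => //.
  move: E (Hr _ h1) (Hr _ h2); rewrite /P.
  case: (sig n1) => s1 t1; case: (sig n2) => s2 t2 /= E r1 r2.
  by rewrite -(unlad_lad q s1 t1 r1) E unlad_lad.
- rewrite map_inj_in_uniq ?iota_uniq // => n1 n2.
  rewrite !mem_iota !add0n => /andP[_ h1] /andP[_ h2] E.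
  have h1' : n1.+1 < N by lia.
  have h2' : n2.+1 < N by lia.
  apply: Htinj => //. have := @optlab_inj q _ _ (Hto _ h1') (Hto _ h2'). apply.
  by rewrite -!Hlab.
- move=> n hn; rewrite /P Hlab //.
  move: (Htau _ hn); case: (tau n) => [[s t]|] /=; last first.
    move=> _; split => //; apply/eqP => E.
    have [_ p _] := llab_all q ex.1 ex.2 Hex; by move: p; rewrite -E.
  move=> [ht hne]; have [e1 p _] := llab_all q s t ht; split.
    by apply/eqP => E; move: p; rewrite E.
  apply/eqP => E; apply: hne; have [e2 _ _] := llab_all q ex.1 ex.2 Hex.
  by move: e1; rewrite E e2 => <-; rewrite -surjective_pairing.
- by move=> n hn; rewrite /P; apply: lad_lt; apply: Hr.
Qed.

Lemma rungP q t : t <= 8*q+2 -> lab (8*q+3) (lad q false t) (lad q true t) = (true, 0).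
Proof.
move=> /(lad_lt q false) ; rewrite /lab /lad /psi.
case: (ladP q t) => [[] x] /= Hx; split_ifs; cleanb; try (exfalso; lia); f_equal; lia.
Qed.

Lemma rungQ q t : t <= 8*q+2 -> lab (8*q+3) (lad q true t) (lad q false t) = (true, 0).
Proof.
move=> /(lad_lt q false) ; rewrite /lab /lad /psi.
case: (ladP q t) => [[] x] /= Hx; split_ifs; cleanb; try (exfalso; lia); f_equal; lia.
Qed.

Lemma ladE q s t j r : t = 4*j + r -> r < 4 -> lad q s t =
  let p := match r with
   | 0 => (false, if j == 0 then 0 else 8*q+3 - j)
   | 1 => (true, 4*q+1 - j) | 2 => (true, 4*q+1 + j + 1) | _ => (false, j.+1) end in
  if s then psi (8*q+3) p else p.
Proof.
move=> -> ; case: r => [|[|[|[|r]]]] // _; rewrite /lad ?addn0 ?ladP0 ?ladP1 ?ladP2 ?ladP3 //.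
Qed.

Ltac sfin := split_ifs; cleanb; try (exfalso; lia); try done; try (f_equal; lia).

Definition sig3 q n : bool * nat :=
  if n <= 4*q then (false, n) else if n <= 8*q+3 then (true, n - 1)
  else if n <= 12*q+3 then (true, n - (8*q+4)) else (false, n - (8*q+3)).
Definition tau3 q n : option (bool * nat) :=
  if n < 4*q then Some (false, n) else if n == 4*q then None
  else if n < 8*q+3 then Some (true, n-1) else if n == 8*q+3 then Some (false, 4*q)
  else if n < 12*q+3 then Some (true, n - (8*q+4)) else if n == 12*q+3 then Some (false, 8*q+1)
  else Some (false, n - (8*q+3)).

Lemma lab3 q n : 1 <= q -> n.+1 < 16*q+5 ->
  lab (8*q+3) (lad q (sig3 q n).1 (sig3 q n).2) (lad q (sig3 q n.+1).1 (sig3 q n.+1).2)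
  = optlab q (tau3 q n).
Proof.
move=> hq hn.
case: (eqVneq n (4*q)) => [->|n1].
  have -> : sig3 q (4*q) = (false, 4*q) by rewrite /sig3; sfin.
  have -> : sig3 q (4*q).+1 = (true, 4*q) by rewrite /sig3; sfin.
  have -> : tau3 q (4*q) = None by rewrite /tau3; sfin.
  by rewrite /= rungP //; lia.
case: (eqVneq n (8*q+3)) => [->|n2].
  have -> : sig3 q (8*q+3) = (true, 8*q+2) by rewrite /sig3; sfin.
  have -> : sig3 q (8*q+3).+1 = (true, 0) by rewrite /sig3; sfin.
  have -> : tau3 q (8*q+3) = Some (false, 4*q) by rewrite /tau3; sfin.
  cbn [fst snd optlab]; rewrite /llab (@ladE q true (8*q+2) (2*q) 2) // ?(@ladE q true 0 0 0) //
     ?(@ladE q false (4*q) q 0) // ?(@ladE q false (4*q).+1 q 1) //; try lia.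
  rewrite /lab /psi /=; sfin.
case: (eqVneq n (12*q+3)) => [->|n3].
  have -> : sig3 q (12*q+3) = (true, 4*q-1) by rewrite /sig3; sfin.
  have -> : sig3 q (12*q+3).+1 = (false, 4*q+1) by rewrite /sig3; sfin.
  have -> : tau3 q (12*q+3) = Some (false, 8*q+1) by rewrite /tau3; sfin.
  cbn [fst snd optlab]; rewrite /llab (@ladE q true (4*q-1) (q-1) 3) // ?(@ladE q false (4*q+1) q 1) //
     ?(@ladE q false (8*q+1) (2*q) 1) // ?(@ladE q false (8*q+1).+1 (2*q) 2) //; try lia.
  rewrite /lab /psi /=; sfin.
rewrite /sig3 /tau3; split_ifs; cleanb; try (exfalso; lia); cbn [fst snd optlab]; rewrite /llab; congr lab; congr lad; lia.
Qed.

Ltac pairinv := let E := fresh "E" in move=> E; inversion E; clear E; try lia.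

Lemma fam3_ok q : 1 <= q ->
  let P n := lad q (sig3 q n).1 (sig3 q n).2 in
  [/\ uniq [seq P n | n <- iota 0 (16*q+5)],
      uniq [seq lab (8*q+3) (P n) (P n.+1) | n <- iota 0 (16*q+5).-1],
      (forall n, n.+1 < 16*q+5 -> lab (8*q+3) (P n) (P n.+1) != (false, 0) /\
                              lab (8*q+3) (P n) (P n.+1) != (false, 2*q))
    & forall n, n < 16*q+5 -> (P n).2 < 8*q+3].
Proof.
move=> hq.
have Hex : llab q true (4*q-1) = (false, 2*q).
  rewrite /llab (@ladE q true (4*q-1) (q-1) 3) ?(@ladE q true (4*q-1).+1 q 0); try lia.
  rewrite /lab /psi /=; sfin.
rewrite -Hex.
apply: (@frame q (sig3 q) (tau3 q) (16*q+5) (true, 4*q-1)).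
- move=> n hn; rewrite /sig3; split_ifs; simpl; lia.
- move=> n1 n2 h1 h2; rewrite /sig3; split_ifs; pairinv.
- by move=> n hn; apply: lab3.
- move=> n hn; rewrite /tau3; split_ifs; cleanb; try done; (split; [simpl; lia | pairinv]).
- move=> n1 n2 h1 h2; rewrite /tau3; split_ifs; cleanb; pairinv.
- simpl; lia.
Qed.

Definition sig5 q n : bool * nat :=
  if n <= 1 then (true, 4*q+2+n)
  else if n <= 4*q+1 then (false, n + 4*q+1)
  else if n <= 8*q+3 then (true, n - (4*q+2))
  else if n <= 12*q+2 then (true, n - 4*q)
  else (false, n - (12*q+3)).
Definition tau5 q n : option (bool * nat) :=
  if n == 0 then Some (true, 4*q+2)
  else if n == 1 then None
  else if n <= 4*q then Some (false, n + 4*q+1)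
  else if n == 4*q+1 then Some (false, 4*q+1)
  else if n <= 8*q+2 then Some (true, n - (4*q+2))
  else if n == 8*q+3 then Some (false, 4*q+2)
  else if n <= 12*q+1 then Some (true, n - 4*q)
  else if n == 12*q+2 then Some (true, 4*q+1)
  else Some (false, n - (12*q+3)).

Lemma lab5 q n : 1 <= q -> n.+1 < 16*q+5 ->
  lab (8*q+3) (lad q (sig5 q n).1 (sig5 q n).2) (lad q (sig5 q n.+1).1 (sig5 q n.+1).2)
  = optlab q (tau5 q n).
Proof.
move=> hq hn.
case: (eqVneq n 1) => [->|n1].
  have -> : sig5 q 1 = (true, 4*q+3) by rewrite /sig5; sfin.
  have -> : sig5 q 2 = (false, 4*q+3) by rewrite /sig5; sfin.
  have -> : tau5 q 1 = None by rewrite /tau5; sfin.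
  by rewrite /= rungQ //; lia.
case: (eqVneq n (4*q+1)) => [->|n2].
  have -> : sig5 q (4*q+1) = (false, 8*q+2) by rewrite /sig5; sfin.
  have -> : sig5 q (4*q+1).+1 = (true, 0) by rewrite /sig5; sfin.
  have -> : tau5 q (4*q+1) = Some (false, 4*q+1) by rewrite /tau5; sfin.
  cbn [fst snd optlab]; rewrite /llab (@ladE q false (8*q+2) (2*q) 2) // ?(@ladE q true 0 0 0) //
     ?(@ladE q false (4*q+1) q 1) // ?(@ladE q false (4*q+1).+1 q 2) //; try lia.
  rewrite /lab /psi /=; sfin.
case: (eqVneq n (8*q+3)) => [->|n3].
  have -> : sig5 q (8*q+3) = (true, 4*q+1) by rewrite /sig5; sfin.
  have -> : sig5 q (8*q+3).+1 = (true, 4*q+4) by rewrite /sig5; sfin.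
  have -> : tau5 q (8*q+3) = Some (false, 4*q+2) by rewrite /tau5; sfin.
  cbn [fst snd optlab]; rewrite /llab (@ladE q true (4*q+1) q 1) // ?(@ladE q true (4*q+4) (q+1) 0) //
     ?(@ladE q false (4*q+2) q 2) // ?(@ladE q false (4*q+2).+1 q 3) //; try lia.
  rewrite /lab /psi /=; sfin.
case: (eqVneq n (12*q+2)) => [->|n4].
  have -> : sig5 q (12*q+2) = (true, 8*q+2) by rewrite /sig5; sfin.
  have -> : sig5 q (12*q+2).+1 = (false, 0) by rewrite /sig5; sfin.
  have -> : tau5 q (12*q+2) = Some (true, 4*q+1) by rewrite /tau5; sfin.
  cbn [fst snd optlab]; rewrite /llab (@ladE q true (8*q+2) (2*q) 2) // ?(@ladE q false 0 0 0) //
     ?(@ladE q true (4*q+1) q 1) // ?(@ladE q true (4*q+1).+1 q 2) //; try lia.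
  rewrite /lab /psi /=; sfin.
rewrite /sig5 /tau5; split_ifs; cleanb; try (exfalso; lia); cbn [fst snd optlab]; rewrite /llab; congr lab; congr lad; lia.
Qed.

Lemma fam5_ok q : 1 <= q ->
  let P n := lad q (sig5 q n).1 (sig5 q n).2 in
  [/\ uniq [seq P n | n <- iota 0 (16*q+5)],
      uniq [seq lab (8*q+3) (P n) (P n.+1) | n <- iota 0 (16*q+5).-1],
      (forall n, n.+1 < 16*q+5 -> lab (8*q+3) (P n) (P n.+1) != (false, 0) /\
                              lab (8*q+3) (P n) (P n.+1) != (false, 2*q+2))
    & forall n, n < 16*q+5 -> (P n).2 < 8*q+3].
Proof.
move=> hq.
have Hex : llab q true (4*q+3) = (false, 2*q+2).
  rewrite /llab (@ladE q true (4*q+3) q 3) ?(@ladE q true (4*q+3).+1 (q+1) 0); try lia.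
  rewrite /lab /psi /=; sfin.
rewrite -Hex.
apply: (@frame q (sig5 q) (tau5 q) (16*q+5) (true, 4*q+3)).
- move=> n hn; rewrite /sig5; split_ifs; simpl; lia.
- move=> n1 n2 h1 h2; rewrite /sig5; split_ifs; pairinv.
- by move=> n hn; apply: lab5.
- move=> n hn; rewrite /tau5; split_ifs; cleanb; try done; (split; [simpl; lia | pairinv]).
- move=> n1 n2 h1 h2; rewrite /tau5; split_ifs; cleanb; pairinv.
- simpl; lia.
Qed.

Definition sig7 q n : bool * nat :=
  if n == 0 then (true, 0)
  else if n <= 4*q-2 then (false, n - 1)
  else if n == 4*q-1 then (false, 4*q-1)
  else if n == 4*q then (false, 4*q-2)
  else if n <= 8*q+2 then (false, n)
  else (true, n - (8*q+2)).
Definition tau7 q n : option (bool * nat) :=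
  if n == 0 then None
  else if n <= 4*q-3 then Some (false, n-1)
  else if n == 4*q-2 then Some (true, 0)
  else if n == 4*q-1 then Some (false, 4*q-2)
  else if n == 4*q then Some (false, 4*q-1)
  else if n <= 8*q+1 then Some (false, n)
  else if n == 8*q+2 then Some (false, 4*q)
  else Some (true, n - (8*q+2)).

Lemma lab7 q n : 2 <= q -> n.+1 < 16*q+5 ->
  lab (8*q+3) (lad q (sig7 q n).1 (sig7 q n).2) (lad q (sig7 q n.+1).1 (sig7 q n.+1).2)
  = optlab q (tau7 q n).
Proof.
move=> hq hn.
case: (eqVneq n 0) => [->|n0].
  have -> : sig7 q 0 = (true, 0) by rewrite /sig7; sfin.
  have -> : sig7 q 1 = (false, 0) by rewrite /sig7; sfin.
  have -> : tau7 q 0 = None by rewrite /tau7; sfin.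
  by rewrite /= rungQ //; lia.
case: (eqVneq n (4*q-2)) => [->|n1].
  have -> : sig7 q (4*q-2) = (false, 4*q-3) by rewrite /sig7; sfin.
  have -> : sig7 q (4*q-2).+1 = (false, 4*q-1) by rewrite /sig7; sfin.
  have -> : tau7 q (4*q-2) = Some (true, 0) by rewrite /tau7; sfin.
  cbn [fst snd optlab]; rewrite /llab (@ladE q false (4*q-3) (q-1) 1) // ?(@ladE q false (4*q-1) (q-1) 3) //
     ?(@ladE q true 0 0 0) // ?(@ladE q true 1 0 1) //; try lia.
  rewrite /lab /psi /=; sfin.
case: (eqVneq n (4*q-1)) => [->|n2].
  have -> : sig7 q (4*q-1) = (false, 4*q-1) by rewrite /sig7; sfin.
  have -> : sig7 q (4*q-1).+1 = (false, 4*q-2) by rewrite /sig7; sfin.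
  have -> : tau7 q (4*q-1) = Some (false, 4*q-2) by rewrite /tau7; sfin.
  cbn [fst snd optlab]; rewrite /llab (@ladE q false (4*q-1) (q-1) 3) // ?(@ladE q false (4*q-2) (q-1) 2) //
     ?(@ladE q false (4*q-2).+1 (q-1) 3) //; try lia.
  rewrite /lab /psi /=; sfin.
case: (eqVneq n (4*q)) => [->|n3].
  have -> : sig7 q (4*q) = (false, 4*q-2) by rewrite /sig7; sfin.
  have -> : sig7 q (4*q).+1 = (false, 4*q+1) by rewrite /sig7; sfin.
  have -> : tau7 q (4*q) = Some (false, 4*q-1) by rewrite /tau7; sfin.
  cbn [fst snd optlab]; rewrite /llab (@ladE q false (4*q-2) (q-1) 2) // ?(@ladE q false (4*q+1) q 1) //
     ?(@ladE q false (4*q-1) (q-1) 3) // ?(@ladE q false (4*q-1).+1 q 0) //; try lia.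
  rewrite /lab /psi /=; sfin.
case: (eqVneq n (8*q+2)) => [->|n4].
  have -> : sig7 q (8*q+2) = (false, 8*q+2) by rewrite /sig7; sfin.
  have -> : sig7 q (8*q+2).+1 = (true, 1) by rewrite /sig7; sfin.
  have -> : tau7 q (8*q+2) = Some (false, 4*q) by rewrite /tau7; sfin.
  cbn [fst snd optlab]; rewrite /llab (@ladE q false (8*q+2) (2*q) 2) // ?(@ladE q true 1 0 1) //
     ?(@ladE q false (4*q) q 0) // ?(@ladE q false (4*q).+1 q 1) //; try lia.
  rewrite /lab /psi /=; sfin.
rewrite /sig7 /tau7; split_ifs; cleanb; try (exfalso; lia); cbn [fst snd optlab]; rewrite /llab; congr lab; congr lad; lia.
Qed.

Lemma fam7_ok q : 2 <= q ->
  let P n := lad q (sig7 q n).1 (sig7 q n).2 in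
  [/\ uniq [seq P n | n <- iota 0 (16*q+5)],
      uniq [seq lab (8*q+3) (P n) (P n.+1) | n <- iota 0 (16*q+5).-1],
      (forall n, n.+1 < 16*q+5 -> lab (8*q+3) (P n) (P n.+1) != (false, 0) /\
                              lab (8*q+3) (P n) (P n.+1) != (false, 2*q-1))
    & forall n, n < 16*q+5 -> (P n).2 < 8*q+3].
Proof.
move=> hq.
have Hex : llab q false (4*q-3) = (false, 2*q-1).
  rewrite /llab (@ladE q false (4*q-3) (q-1) 1) ?(@ladE q false (4*q-3).+1 (q-1) 2); try lia.
  rewrite /lab /psi /=; sfin.
rewrite -Hex.
apply: (@frame q (sig7 q) (tau7 q) (16*q+5) (false, 4*q-3)).
- move=> n hn; rewrite /sig7; split_ifs; cleanb; simpl; lia.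
- move=> n1 n2 h1 h2; rewrite /sig7; split_ifs; cleanb; pairinv.
- by move=> n hn; apply: lab7.
- move=> n hn; rewrite /tau7; split_ifs; cleanb; try done; (split; [simpl; lia | pairinv]).
- move=> n1 n2 h1 h2; rewrite /tau7; split_ifs; cleanb; pairinv.
- simpl; lia.
Qed.

Lemma find_t_core n d a' b' t0 K : prime d -> coprime t0 n -> t0 * a' = b' + n * K ->
  exists t, coprime t (n * d) /\ (t * (a' * d)) %% (n * d) = (b' * d) %% (n * d).
Proof.
move=> pd ct0 E.
have key t K' : t * a' = b' + n * K' -> (t * (a' * d)) %% (n * d) = (b' * d) %% (n * d).
  move=> E'; rewrite mulnA E' mulnDl (mulnAC n K' d) addnC mulnC.
  by rewrite modnMDl.
case: (boolP (d %| t0)) => dt.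
- exists (t0 + n); split; last first.
    apply: (key _ (K + a')); by rewrite mulnDl E mulnDr addnA.
  rewrite coprimeMr; apply/andP; split.
    by rewrite -coprime_modl modnDr coprime_modl.
  rewrite coprime_sym prime_coprime // dvdn_addr //.
  apply/negP => dn; have : d %| gcdn t0 n by rewrite dvdn_gcd dt dn.
  by rewrite (eqP ct0) dvdn1 => /eqP d1; move: pd; rewrite d1.
- exists t0; split; last exact: (key _ K).
  by rewrite coprimeMr ct0 coprime_sym prime_coprime.
Qed.

Lemma find_t n d a' b' : prime d -> odd n -> 4 < n -> coprime n b' ->
  (4 * a' = n + 1 \/ 4 * a' = n - 1) ->
  exists t, coprime t (n * d) /\ (t * (a' * d)) %% (n * d) = (b' * d) %% (n * d).
Proof.
move=> pd on n4 cb [h|h].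
- apply: (@find_t_core n d a' b' (4 * b') b' pd).
    rewrite coprimeMl (coprime_sym b') cb andbT (_ : 4 = 2 ^ 2) //.
    by rewrite coprime_pexpl // coprime2n.
  have -> : 4 * b' * a' = b' * (4 * a') by rewrite mulnAC mulnC.
  by rewrite h mulnDr muln1 addnC mulnC.
- have [c hc] : exists c, a' = c.+1 by exists a'.-1; lia.
  have hn : n = 4 * c + 5 by lia.
  apply: (@find_t_core n d a' b' ((n - 4) * b') (b' * c) pd).
    rewrite coprimeMl (coprime_sym b') cb andbT.
    have -> : n - 4 = 4 * c + 1 by lia.
    have -> : n = (4 * c + 1) + 4 by lia.
    rewrite /coprime gcdnDl.
    rewrite -/(coprime _ _) (_ : 4 = 2 ^ 2) // coprime_pexpr // coprimen2.
    by rewrite oddD oddM.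
  rewrite hc hn (_ : 4 * c + 5 - 4 = 4 * c + 1); last by lia.
  nia.
Qed.

Local Open Scope group_scope.

Definition phi (gT : finGroupType) (w v : gT) (u : vtx) : gT :=
  if u.1 then (w ^+ u.2)^-1 * v else w ^+ u.2.
Arguments phi {gT} w v u.

Lemma expg_subm {gT : finGroupType} {w : gT} {m k : nat} : #[w] = m -> m <= k -> w ^+ k = w ^+ (k - m).
Proof. move=> hm h; by rewrite -{1}(subnKC h) expgD -hm expg_order mul1g. Qed.

Lemma rr (gT : finGroupType) (w : gT) m i j : #[w] = m -> i < m -> j < m ->
  (w ^+ i)^-1 * w ^+ j = w ^+ (if i <= j then j - i else m + j - i).
Proof.
move=> hm hi hj; case: leqP => h.
  by rewrite -{1}(subnKC h) expgD mulKg.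
have E : w ^+ j = w ^+ i * w ^+ (m + j - i).
  rewrite -expgD (_ : i + (m + j - i) = m + j); last by lia.
  by rewrite expgD -hm expg_order mul1g.
by rewrite {1}E mulKg.
Qed.

Lemma phi_lab (gT : finGroupType) (w v : gT) m (u1 u2 : vtx) :
  #[w] = m -> v * v = 1 -> w ^ v = w^-1 -> u1.2 < m -> u2.2 < m ->
  (phi w v u1)^-1 * phi w v u2 = phi w v (lab m u1 u2).
Proof.
move=> hm hv hc; case: u1 => [[] i]; case: u2 => [[] j] /= hi hj; rewrite /phi /lab /=.
-
  have -> : ((w ^+ i)^-1 * v)^-1 * ((w ^+ j)^-1 * v) = (w ^+ i)^-1 * w ^+ j.
    rewrite invMg invgK.
    transitivity ((w ^+ i * (w ^+ j)^-1) ^ v); first by rewrite conjgE !mulgA.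
    by rewrite conjMg conjVg !conjXg hc !expgVn invgK.
  exact: rr.
-
  have vV : v^-1 = v by apply/eqP; rewrite eq_invg_mul hv.
  have -> : ((w ^+ i)^-1 * v)^-1 * w ^+ j = (w ^+ (i + j))^-1 * v.
    rewrite invMg invgK -mulgA -expgD.
    have : (w ^+ (i+j)) ^ v = (w ^+ (i + j))^-1 by rewrite conjXg hc expgVn.
    rewrite conjgE => E.
    by rewrite -E !mulgA -(mulgA _ v v) hv mulg1.
  case: ifP => h //; by rewrite (expg_subm hm) // leqNgt h.
-
  have -> : (w ^+ i)^-1 * ((w ^+ j)^-1 * v) = (w ^+ (i + j))^-1 * v.
    by rewrite mulgA -invMg -expgD addnC.
  case: ifP => h //; by rewrite (expg_subm hm) // leqNgt h.
- exact: rr.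
Qed.

Lemma phi_inj {gT : finGroupType} {w v : gT} {m : nat} {u1 u2 : vtx} :
  #[w] = m -> v \notin <[w]> -> u1.2 < m -> u2.2 < m -> phi w v u1 = phi w v u2 -> u1 = u2.
Proof.
move=> hm hv; case: u1 => [[] i]; case: u2 => [[] j] /= hi hj; rewrite /phi /=.
- move/mulIg/invg_inj/eqP; rewrite eq_expg_mod_order hm !modn_small // => /eqP -> //.
- move=> E; case/negP: hv; have -> : v = w ^+ i * w ^+ j by rewrite -E mulKVg.
  by rewrite -expgD mem_cycle.
- move=> E; case/negP: hv; have -> : v = w ^+ j * w ^+ i by rewrite E mulKVg.
  by rewrite -expgD mem_cycle.
- move/eqP; rewrite eq_expg_mod_order hm !modn_small // => /eqP -> //.
Qed.

Lemma scan_tele (gT : finGroupType) (f : nat -> gT) K k c :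
  scanl mulg c [seq (f n)^-1 * f n.+1 | n <- iota k K] = [seq c * (f k)^-1 * f n | n <- iota k.+1 K].
Proof.
elim: K k c => [|K IH] k c //=.
rewrite IH; congr (_ :: _); first by rewrite mulgA.
apply: eq_map => n; by rewrite !mulgA mulgK.
Qed.

Lemma pp_tele (gT : finGroupType) (f : nat -> gT) K :
  partial_products [seq (f n)^-1 * f n.+1 | n <- iota 0 K] = [seq (f 0)^-1 * f n | n <- iota 0 K.+1].
Proof.
rewrite /partial_products scan_tele /= mulVg; congr (_ :: _).
by apply: eq_map => n; rewrite mul1g.
Qed.

Lemma lab_lt m (u v : vtx) : u.2 < m -> v.2 < m -> (lab m u v).2 < m.
Proof. move=> hu hv; rewrite /lab; split_ifs; simpl; lia. Qed.

Lemma seq_from_path (gT : finGroupType) (w v : gT) (m a : nat) (S : {set gT}) (p : nat -> vtx) :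
  #[w] = m -> v \notin <[w]> -> v * v = 1 -> w ^ v = w^-1 ->
  #|gT| = m.*2 -> #|S| = (m.*2).-2 -> 1 \notin S -> w ^+ a \notin S -> 0 < a < m ->
  uniq [seq p n | n <- iota 0 (m.*2).-1] ->
  uniq [seq lab m (p n) (p n.+1) | n <- iota 0 ((m.*2).-1).-1] ->
  (forall n, n.+1 < (m.*2).-1 -> lab m (p n) (p n.+1) != (false,0) /\ lab m (p n) (p n.+1) != (false,a)) ->
  (forall n, n < (m.*2).-1 -> (p n).2 < m) ->
  has_S_sequencing S.
Proof.
move=> hm hvw hv hc hG hS h1S hxS ha Up Ul Hne Hlt.
set N := (m.*2).-1.
set L := fun n => lab m (p n) (p n.+1).
have HL n : n.+1 < N -> (L n).2 < m by move=> h; apply: lab_lt; apply: Hlt; lia.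
have phiI : {in [pred u : vtx | u.2 < m] &, injective (phi w v)}.
  by move=> u1 u2 h1 h2; apply: (phi_inj hm hvw).
have wa1 : w ^+ a != 1.
  apply/negP => /eqP E; have : #[w] %| a by rewrite order_dvdn E.
  rewrite hm; case/andP: ha => a0 am /(dvdn_leq a0); lia.
set s := [seq phi w v (L n) | n <- iota 0 N.-1].
have memL n : n \in iota 0 N.-1 -> n.+1 < N by rewrite mem_iota; lia.
have Cs y : y \in s -> (y != 1) && (y != w ^+ a).
  case/mapP => n /memL hn ->; have [h0 ha'] := Hne n hn.
  apply/andP; split; apply/eqP => E.
    have : phi w v (L n) = phi w v (false, 0) by rewrite E /phi /=.
    have hm0 : (false, 0).2 < m by case/andP: ha => ? ?; simpl; lia.
    by move/(phi_inj hm hvw (HL n hn) hm0) => E'; move: h0; rewrite -/(L n) E'.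
  have : phi w v (L n) = phi w v (false, a) by rewrite E /phi /=.
  have hma : (false, a).2 < m by case/andP: ha => ? ?; simpl; lia.
  by move/(phi_inj hm hvw (HL n hn) hma) => E'; move: ha'; rewrite -/(L n) E' eqxx.
have Us : uniq s.
  have Es : s = map (phi w v) (map L (iota 0 N.-1)) by rewrite /s; elim: (iota 0 N.-1) => //= ? ? ->.
  rewrite Es map_inj_in_uniq //.
  move=> x y /mapP[n1 /memL h1 ->] /mapP[n2 /memL h2 ->]; apply: phiI; rewrite inE; exact: HL.
have sizes : size s = (m.*2).-2 by rewrite /s size_map size_iota /N; lia.
have cardC : #|~: [set 1; w ^+ a]| = (m.*2).-2.
  have := cardsC [set 1; w ^+ a]; rewrite cards2 (eq_sym 1) wa1 hG; lia.
have SC : S = ~: [set 1; w ^+ a].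
  apply/eqP; rewrite eqEcard cardC hS leqnn andbT; apply/subsetP => y yS.
  rewrite !inE; apply/norP; split; apply/eqP => E; [move: h1S | move: hxS]; by rewrite -E yS.
have sC : [set x in s] = ~: [set 1; w ^+ a].
  apply/eqP; rewrite eqEcard cardC; apply/andP; split.
    apply/subsetP => y; rewrite !inE => /Cs /andP[y1 ya]; by rewrite negb_or y1 ya.
  by rewrite cardsE (card_uniqP Us) sizes.
exists s; split => //; split; first by rewrite sC SC.
have Es : s = [seq (phi w v (p n))^-1 * phi w v (p n.+1) | n <- iota 0 N.-1].
  apply/eq_in_map => n /memL hn; rewrite /L (@phi_lab _ w v m) //; apply: Hlt; lia.
rewrite Es pp_tele.
have -> : N.-1.+1 = N by rewrite /N; case/andP: ha => ? ?; lia.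
have -> : [seq (phi w v (p 0))^-1 * phi w v (p n) | n <- iota 0 N] =
          map (mulg (phi w v (p 0))^-1) (map (phi w v) (map p (iota 0 N))).
  by elim: (iota 0 N) => //= ? ? ->.
rewrite map_inj_uniq; last exact: mulgI.
rewrite map_inj_in_uniq // => x y /mapP[n1 h1 ->] /mapP[n2 h2 ->]; apply: phiI; rewrite inE;
  apply: Hlt; move: h1 h2; rewrite !mem_iota; lia.
Qed.

Lemma dih_gens n q : n = q.*2 -> 1 < q ->
  exists u v : 'D_n, [/\ #[u] = q, v \notin <[u]>, v * v = 1 & u ^ v = u^-1] /\
    [/\ #|'D_n| = q.*2, <[u]> * <[v]> = [set: 'D_n] & #[v] = 2].
Proof.
move=> -> q1.
set G := 'D_(q.*2).
have oG : #|G| = q.*2 by rewrite card_dihedral.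
case/(isoGrpP _ (Grp_dihedral q1)): (isog_refl G) => _.
case/existsP=> -[x y] /= => /eqP[defG xq y2 xy].
have{} defG: <[x]> * <[y]> = G.
  by rewrite -norm_joinEr // norms_cycle xy groupV cycle_id.
have notXy: y \notin <[x]>.
  apply/negP => Xy; have : #|G| <= q.
    by rewrite -defG mulGSid ?cycle_subG // dvdn_leq ?(ltnW q1) // order_dvdn xq.
  rewrite oG -addnn => h; lia.
have oy : #[y] = 2 by apply: (nt_prime_order _ y2 (group1_contra notXy)).
have cardG : #|G| = (#[x] * #[y])%N.
  by rewrite -defG TI_cardMg // setIC prime_TIg ?cycle_subG // -orderE oy.
exists x, y; split; split => //.
all: try by move: cardG; rewrite oG oy => h; lia.
all: try by rewrite -expgS y2.
Qed.

Close Scope group_scope.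

Lemma arithN q : ((8*q+3).*2).-1 = 16*q+5.
Proof. lia. Qed.
Lemma arithS q : 16*q+4 = ((8*q+3).*2).-2.
Proof. lia. Qed.

Lemma main_abs (gT : finGroupType) (u v x : gT) (q d : nat) (S : {set gT}) :
  #[u]%g = 8*q+3 -> v \notin <[u]>%g -> (v * v = 1)%g -> (u ^ v = u^-1)%g -> #|gT| = (8*q+3).*2 ->
  (<[u]> * <[v]>)%g = [set: gT] -> #[v]%g = 2 ->
  d \in [:: 3; 5; 7] -> (#[x]%g * d)%N = 8*q+3 -> x != 1%g -> x \notin S -> 1%g \notin S ->
  #|S| = 16*q+4 -> has_S_sequencing S.
Proof.
move=> hu hvu hv hc hG hUV ov hd hxd x1 xS oneS hS.
set m := 8*q+3.
have vV : (v^-1 = v)%g by apply/eqP; rewrite eq_invg_mul hv.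
have notU z : z \notin <[u]>%g -> (z ^+ 2 = 1)%g.
  move=> zU; have : z \in (<[u]> * <[v]>)%g by rewrite hUV inE.
  case/mulsgP => y z' yU /cycleP[k ->] ez.
  move: zU; rewrite ez -(expg_mod_order v k) ov.
  have : k %% 2 < 2 by rewrite ltn_mod.
  case: (k %% 2) => [|[|//]] _; first by rewrite expg0 mulg1 yU.
  move=> _; case/cycleP: yU => j ->.
  have E : (v * (u ^+ j * v) = (u ^+ j)^-1)%g by rewrite -{1}vV -conjgE conjXg hc expgVn.
  by rewrite expg1 expgS expg1 -mulgA E mulgV.
have ox_odd : odd #[x]%g.
  have : odd (#[x]%g * d) by rewrite hxd oddD oddM.
  by rewrite oddM => /andP[].
have xU : x \in <[u]>%g.
  apply/negPn/negP => /notU x2.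
  have : #[x]%g %| 2 by rewrite order_dvdn x2.
  move: (order_gt0 x) ox_odd x1; rewrite -order_eq1.
  case: #[x]%g => [|[|[|o]]] //.
case/cycleP: xU => i xE.
have m0 : 0 < m by rewrite /m; lia.
have gi : gcdn m i = d.
  have ox : #[x]%g = m %/ gcdn m i by rewrite xE orderXgcd hu.
  have g0 : 0 < gcdn m i by rewrite gcdn_gt0 m0.
  have dg : m %/ gcdn m i * gcdn m i = m := divnK (dvdn_gcdl m i).
  have mg0 : 0 < m %/ gcdn m i by rewrite divn_gt0 // dvdn_leq // dvdn_gcdl.
  by apply/eqP; rewrite eq_sym -(eqn_pmul2l mg0) dg -ox hxd.
have d0 : 0 < d by move: hd; rewrite !inE => /or3P[] /eqP ->.
set n := #[x]%g.
set b' := i %/ d.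
have ib : i = (b' * d)%N by rewrite divnK // -gi dvdn_gcdr.
have md : m = (n * d)%N by rewrite hxd.
have cb : coprime n b'.
  have := gi; rewrite md ib -muln_gcdl => /eqP.
  by rewrite -{2}(mul1n d) eqn_pmul2r.
have n2 : 1 < n.
  have := order_gt0 x; rewrite -/n; move: x1; rewrite -order_eq1 -/n => /eqP; lia.
have pd : prime d by move: hd; rewrite !inE => /or3P[] /eqP ->.
have [a [a' [ha haa' h4 hq fok]]] : exists a a', [/\ a = (a' * d)%N,
   (4 * a' = n + 1 \/ 4 * a' = n - 1), 4 < n, 0 < a < m &
   exists p : nat -> vtx,
   [/\ uniq [seq p k | k <- iota 0 (16*q+5)],
      uniq [seq lab m (p k) (p k.+1) | k <- iota 0 (16*q+5).-1],
      (forall k, k.+1 < 16*q+5 -> lab m (p k) (p k.+1) != (false, 0) /\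
                              lab m (p k) (p k.+1) != (false, a))
    & forall k, k < 16*q+5 -> (p k).2 < m]].
  move: hd md; rewrite !inE => /or3P[] /eqP -> md.
  - exists (2*q), ((n-1) %/ 4); split; try lia.
    have hq : 1 <= q by lia.
    have [U1 U2 H3 H4] := fam3_ok q hq.
    by exists (fun k => lad q (sig3 q k).1 (sig3 q k).2); split.
  - exists (2*q+2), ((n+1) %/ 4); split; try lia.
    have hq : 1 <= q by lia.
    have [U1 U2 H3 H4] := fam5_ok q hq.
    by exists (fun k => lad q (sig5 q k).1 (sig5 q k).2); split.
  - exists (2*q-1), ((n-1) %/ 4); split; try lia.
    have hq : 2 <= q by lia.
    have [U1 U2 H3 H4] := fam7_ok q hq.
    by exists (fun k => lad q (sig7 q k).1 (sig7 q k).2); split.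
case: fok => p [U1 U2 H3 H4].
have on : odd n by move: ox_odd.
have [t [ct tE]] := @find_t n d a' b' pd on h4 cb haa'.
set w := (u ^+ t)%g.
have ow : #[w]%g = m.
  rewrite /w orderXgcd hu -/m; have : coprime m t by rewrite coprime_sym md.
  by rewrite /coprime => /eqP ->; rewrite divn1.
have vw : v \notin <[w]>%g.
  apply: contra hvu => vw; have : <[w]>%g \subset <[u]>%g by rewrite cycle_subG mem_cycle.
  by move/subsetP; apply.
have cw : (w ^ v = w^-1)%g by rewrite /w conjXg hc expgVn.
have wa : (w ^+ a)%g = x.
  rewrite /w -expgM -(expg_mod_order u) hu -/m md ha tE -md -ib xE.
  by rewrite /m -hu expg_mod_order.
have hN : ((m.*2).-1) = 16*q+5 by exact: arithN.
apply: (@seq_from_path gT w v m a S p ow vw hv cw hG).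
- by rewrite hS arithS.
- exact: oneS.
- by rewrite wa.
- exact: hq.
- rewrite hN; exact: U1.
- rewrite hN; exact: U2.
- rewrite hN; exact: H3.
- rewrite hN; exact: H4.
Qed.

Local Open Scope group_scope.

Theorem corollary5p13 (l : nat) (S : {set 'D_(8 * l + 6)}) (x : 'D_(8 * l + 6)) :
  ~~ odd l ->
  1 \notin S ->
  #|S| = 8 * l + 4 ->
  x != 1 -> x \notin S ->
  (exists2 d : nat, d \in [:: 3; 5; 7] & (#[x] * d)%N = 4 * l + 3) ->
  has_S_sequencing S.
Proof.
move=> hl h1 hS x1 xS [d hd hxd].
have [q lq] : exists q, l = (2 * q)%N.
  exists l./2; have := odd_double_half l; rewrite (negbTE hl) add0n => E.
  by rewrite -mul2n in E; rewrite E.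
have e1 : 8 * l + 6 = (4 * l + 3).*2 by rewrite -mul2n; lia.
have q1 : 1 < 4 * l + 3 by lia.
have [u [v [[ou vu vv uv] [cD UV ov]]]] := @dih_gens (8 * l + 6) (4 * l + 3) e1 q1.
have em : 4 * l + 3 = 8 * q + 3 by rewrite lq; lia.
have hu : #[u] = 8*q+3 by rewrite ou em.
have hG : #|'D_(8 * l + 6)| = (8*q+3).*2 by rewrite cD em.
have hG' := hG; rewrite cardsT in hG'.
have hx : (#[x] * d)%N = 8*q+3 by rewrite hxd em.
have hS' : #|S| = 16*q+4 by rewrite hS lq; lia.
exact: (@main_abs _ u v x q d S hu vu vv uv hG' UV ov hd hx x1 xS h1 hS').
Qed.
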